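(* For each $n\in\mathbb{N}$ let $D_n=\{(x,y)\in[0,n]^2: x\le y\}$, let $G_n:D_n\to\mathbb{R}$ be continuous, and let $(\mathcal{M}_1(n),\mathcal{M}_2(n))\in D_n$ be a point at which $G_n$ attains its maximum. Let $T=\{(x,y)\in\mathbb{R}^2: 0\le x\le y\le 1\}$ and define $h_n:T\to\mathbb{R}$ by $h_n(x,y)=G_n(nx,ny)$. Assume that $h_n$ converges uniformly on $T$ to a function $h$ and that $(\theta_1,\theta_2)$ is the only global maximum point of $h$ on $T$. Then: (i) $\lim_{n\to\infty}\mathcal{M}_i(n)/n=\theta_i$ for $i=1,2$; (ii) $\lim_{n\to\infty}G_n(\mathcal{M}_1(n),\mathcal{M}_2(n))=h(\theta_1,\theta_2)$; (iii) if $(\mathfrak{M}_1(n),\mathfrak{M}_2(n))\in D_n$ satisfy $\mathfrak{M}_i(n)\sim\mathcal{M}_i(n)$ (i.e. $\mathfrak{M}_i(n)/\mathcal{M}_i(n)\to1$) for $i=1,2$, then $\lim_{n\to\infty}G_n(\mathfrak{M}_1(n),\mathfrak{M}_2(n))=h(\theta_1,\theta_2)$. *)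

(* Defs.v *)
From Stdlib Require Import Reals.
Open Scope R_scope.

Definition inD (n : nat) (x y : R) : Prop :=
  0 <= x /\ x <= INR n /\ 0 <= y /\ y <= INR n /\ x <= y.

Definition inT (x y : R) : Prop := 0 <= x /\ x <= y /\ y <= 1.

Definition continuous_on2 (S : R -> R -> Prop) (f : R -> R -> R) : Prop :=
  forall x0 y0, S x0 y0 ->
  forall eps, 0 < eps -> exists delta, 0 < delta /\
    forall x y, S x y -> Rabs (x - x0) < delta -> Rabs (y - y0) < delta ->
      Rabs (f x y - f x0 y0) < eps.

Definition is_max_point (S : R -> R -> Prop) (f : R -> R -> R) (a b : R) : Prop :=
  S a b /\ forall x y, S x y -> f x y <= f a b.

Definition unif_cv_T (G : nat -> R -> R -> R) (h : R -> R -> R) : Prop :=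
  forall eps, 0 < eps -> exists N : nat, forall n : nat, (N <= n)%nat ->
    forall x y, inT x y -> Rabs (G n (INR n * x) (INR n * y) - h x y) < eps.

(* Main.v *)
Require Import Defs.
From Stdlib Require Import Reals Lra Lia Classical ClassicalEpsilon.
Open Scope R_scope.

Lemma cluster01 (u : nat -> R) : (forall n, 0 <= u n <= 1) ->
  exists l, 0 <= l <= 1 /\ forall eps, 0 < eps -> forall N, exists p, (N <= p)%nat /\ Rabs (u p - l) < eps.
Proof.
  intros Hu.
  destruct (Bolzano_Weierstrass u (fun c => 0 <= c <= 1) (compact_P3 0 1) Hu) as [l Hl].
  assert (Hc : forall eps, 0 < eps -> forall N, exists p, (N <= p)%nat /\ Rabs (u p - l) < eps).
  { intros eps He N. destruct (Hl (disc l (mkposreal eps He)) N) as [p [Hp Hd]].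
    - exists (mkposreal eps He). intros y Hy. exact Hy.
    - exists p. split; [exact Hp| exact Hd]. }
  exists l. split; [|exact Hc].
  split; apply Rnot_lt_le; intro Hlt.
  - destruct (Hc (-l) ltac:(lra) 0%nat) as [p [_ Hp]]. apply Rabs_def2 in Hp. specialize (Hu p). lra.
  - destruct (Hc (l-1) ltac:(lra) 0%nat) as [p [_ Hp]]. apply Rabs_def2 in Hp. specialize (Hu p). lra.
Qed.

Lemma cluster2 (x y : nat -> R) : (forall n, 0 <= x n <= 1) -> (forall n, 0 <= y n <= 1) ->
  exists a b, 0 <= a <= 1 /\ 0 <= b <= 1 /\ forall eps, 0 < eps -> forall N, exists p,
    (N <= p)%nat /\ Rabs (x p - a) < eps /\ Rabs (y p - b) < eps.
Proof.
  intros Hx Hy.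
  destruct (cluster01 x Hx) as [a [Ha Hca]].
  assert (S : forall k : nat, {p : nat | (k <= p)%nat /\ Rabs (x p - a) < / (INR k + 1)}).
  { intro k. apply constructive_indefinite_description. apply Hca.
    apply Rinv_0_lt_compat. pose proof (pos_INR k). lra. }
  set (q := fun k => proj1_sig (S k)).
  destruct (cluster01 (fun k => y (q k)) (fun k => Hy (q k))) as [b [Hb Hcb]].
  exists a, b. split; [exact Ha|]. split; [exact Hb|].
  intros eps He N.
  destruct (archimed_cor1 eps He) as [K [HK HK0]].
  destruct (Hcb eps He (N + K)%nat) as [k [Hk Hyk]].
  exists (q k). unfold q in *. destruct (S k) as [p [Hp1 Hp2]]. simpl in *.
  split; [lia|]. split; [|exact Hyk].
  apply Rlt_trans with (/ (INR k + 1)); [exact Hp2|].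
  apply Rle_lt_trans with (/ INR K); [|exact HK].
  apply Rinv_le_contravar. apply lt_0_INR; lia.
  assert (INR K <= INR k) by (apply le_INR; lia). lra.
Qed.

Lemma gap (h : R -> R -> R) th1 th2 :
  continuous_on2 inT h -> is_max_point inT h th1 th2 ->
  (forall x y, is_max_point inT h x y -> x = th1 /\ y = th2) ->
  forall eps, 0 < eps -> exists d, 0 < d /\ forall x y, inT x y -> h th1 th2 - d < h x y ->
    Rabs (x - th1) < eps /\ Rabs (y - th2) < eps.
Proof.
  intros Hc [HT Hmax] Hu eps He.
  apply NNPP; intro Hn.
  assert (Hk : forall k : nat, exists p : R * R, inT (fst p) (snd p) /\
     h th1 th2 - / (INR k + 1) < h (fst p) (snd p) /\
     (eps <= Rabs (fst p - th1) \/ eps <= Rabs (snd p - th2))).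
  { intro k. apply NNPP; intro Hk. apply Hn. exists (/ (INR k + 1)). split.
    { apply Rinv_0_lt_compat. pose proof (pos_INR k). lra. }
    intros x y HTxy Hh.
    destruct (Rlt_dec (Rabs (x - th1)) eps) as [H1|H1];
    destruct (Rlt_dec (Rabs (y - th2)) eps) as [H2|H2]; try (split; assumption);
    try apply Rnot_lt_le in H1; try apply Rnot_lt_le in H2;
    exfalso; apply Hk; exists (x, y); simpl; (split; [exact HTxy|split; [lra|]]);
    first [left; assumption | right; assumption]. }
  assert (S : forall k : nat, {p : R * R | inT (fst p) (snd p) /\
     h th1 th2 - / (INR k + 1) < h (fst p) (snd p) /\
     (eps <= Rabs (fst p - th1) \/ eps <= Rabs (snd p - th2))}).
  { intro k. apply constructive_indefinite_description. apply Hk. }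
  set (xs := fun k => fst (proj1_sig (S k))).
  set (ys := fun k => snd (proj1_sig (S k))).
  assert (HP : forall k, inT (xs k) (ys k) /\ h th1 th2 - / (INR k + 1) < h (xs k) (ys k) /\
     (eps <= Rabs (xs k - th1) \/ eps <= Rabs (ys k - th2))).
  { intro k. unfold xs, ys. destruct (S k) as [p Hp]. exact Hp. }
  destruct (cluster2 xs ys) as [a [b [Ha [Hb Hcl]]]].
  { intro n. destruct (HP n) as [[? [? ?]] _]. lra. }
  { intro n. destruct (HP n) as [[? [? ?]] _]. lra. }
  assert (HTab : inT a b).
  { unfold inT. split; [lra|]. split; [|lra].
    apply Rnot_lt_le; intro Hlt.
    destruct (Hcl ((a - b)/2) ltac:(lra) 0%nat) as [p [_ [H1 H2]]].
    apply Rabs_def2 in H1. apply Rabs_def2 in H2. destruct (HP p) as [[? [? ?]] _]. lra. }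
  assert (Hge : h th1 th2 <= h a b).
  { apply Rnot_lt_le; intro Hlt.
    set (eta := (h th1 th2 - h a b) / 2).
    assert (Heta : 0 < eta) by (unfold eta; lra).
    destruct (Hc a b HTab eta Heta) as [d [Hd Hcd]].
    destruct (archimed_cor1 eta Heta) as [K [HK HK0]].
    destruct (Hcl d Hd K) as [p [Hp [H1 H2]]].
    destruct (HP p) as [HTp [Hhp _]].
    specialize (Hcd _ _ HTp H1 H2). apply Rabs_def2 in Hcd.
    assert (/ (INR p + 1) <= / INR K).
    { apply Rinv_le_contravar. apply lt_0_INR; lia.
      assert (INR K <= INR p) by (apply le_INR; lia). lra. }
    unfold eta in *. lra. }
  destruct (Hu a b) as [E1 E2].
  { split; [exact HTab|]. intros x y Hxy. specialize (Hmax x y Hxy). lra. }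
  subst a b.
  destruct (Hcl eps He 0%nat) as [p [_ [H1 H2]]].
  destruct (HP p) as [_ [_ [H|H]]]; lra.
Qed.

Lemma F1 n x y : inT x y -> inD n (INR n * x) (INR n * y).
Proof. intros [H1 [H2 H3]]. pose proof (pos_INR n). unfold inD. repeat split; nra. Qed.

Lemma F2 n a b : (1 <= n)%nat -> inD n a b ->
  inT (a / INR n) (b / INR n) /\ INR n * (a / INR n) = a /\ INR n * (b / INR n) = b.
Proof.
  intros Hn [H1 [H2 [H3 [H4 H5]]]].
  assert (Hp : 0 < INR n) by (apply lt_0_INR; lia).
  split; [|split; field; lra].
  unfold inT. unfold Rdiv.
  assert (0 < / INR n) by (apply Rinv_0_lt_compat; lra).
  assert (INR n * / INR n = 1) by (field; lra).
  repeat split; nra.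
Qed.

Lemma F3 G n : continuous_on2 (inD n) (G n) ->
  continuous_on2 inT (fun x y => G n (INR n * x) (INR n * y)).
Proof.
  intros Hc x0 y0 H0 eps He.
  destruct (Hc _ _ (F1 n x0 y0 H0) eps He) as [d [Hd Hcd]].
  pose proof (pos_INR n) as Hn.
  set (k := INR n + 1).
  assert (Hk : 0 < k) by (unfold k; lra).
  assert (Hdk : d / k * k = d) by (field; lra).
  exists (d / k). split. { unfold Rdiv. apply Rmult_lt_0_compat; [lra|]. apply Rinv_0_lt_compat; lra. }
  intros x y HT Hx Hy. apply Hcd; [apply F1; exact HT| |].
  - rewrite <- Rmult_minus_distr_l, Rabs_mult, (Rabs_right (INR n)) by lra.
    pose proof (Rabs_pos (x - x0)). unfold k in *. nra.
  - rewrite <- Rmult_minus_distr_l, Rabs_mult, (Rabs_right (INR n)) by lra.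
    pose proof (Rabs_pos (y - y0)). unfold k in *. nra.
Qed.

Lemma F4 G h : (forall n, continuous_on2 (inD n) (G n)) -> unif_cv_T G h -> continuous_on2 inT h.
Proof.
  intros Hc Hu x0 y0 H0 eps He.
  destruct (Hu (eps/3) ltac:(lra)) as [N HN].
  destruct (F3 G N (Hc N) x0 y0 H0 (eps/3) ltac:(lra)) as [d [Hd Hcd]].
  exists d. split; [exact Hd|]. intros x y HT Hx Hy.
  specialize (Hcd x y HT Hx Hy). pose proof (HN N (le_n N) x y HT) as A.
  pose proof (HN N (le_n N) x0 y0 H0) as B.
  apply Rabs_def2 in Hcd. apply Rabs_def2 in A. apply Rabs_def2 in B.
  apply Rabs_def1; lra.
Qed.

Lemma cv_ext (a b : nat -> R) l N : (forall n, (N <= n)%nat -> a n = b n) -> Un_cv a l -> Un_cv b l.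
Proof.
  intros He Ha eps Heps. destruct (Ha eps Heps) as [M HM]. exists (max N M).
  intros n Hn. rewrite <- He by lia. apply HM. lia.
Qed.

Theorem proposition2
  (G : nat -> R -> R -> R) (M1 M2 : nat -> R) (h : R -> R -> R) (theta1 theta2 : R)
  (HGcont : forall n : nat, continuous_on2 (inD n) (G n))
  (HM : forall n : nat, is_max_point (inD n) (G n) (M1 n) (M2 n))
  (Hunif : unif_cv_T G h)
  (Htheta : is_max_point inT h theta1 theta2)
  (Huniq : forall x y, is_max_point inT h x y -> x = theta1 /\ y = theta2) :
  (Un_cv (fun n => M1 n / INR n) theta1 /\ Un_cv (fun n => M2 n / INR n) theta2)
  /\ Un_cv (fun n => G n (M1 n) (M2 n)) (h theta1 theta2)
  /\ (forall m1 m2 : nat -> R,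
        (forall n : nat, inD n (m1 n) (m2 n)) ->
        Un_cv (fun n => m1 n / M1 n) 1 ->
        Un_cv (fun n => m2 n / M2 n) 1 ->
        Un_cv (fun n => G n (m1 n) (m2 n)) (h theta1 theta2)).
Proof.
  assert (Hhc : continuous_on2 inT h) by (apply (F4 G); assumption).
  destruct Htheta as [HTt Hmaxt].
  assert (Key : forall e, 0 < e -> exists N, forall n, (N <= n)%nat ->
     inT (M1 n / INR n) (M2 n / INR n) /\ Rabs (G n (M1 n) (M2 n) - h theta1 theta2) < e
     /\ h theta1 theta2 - 2 * e < h (M1 n / INR n) (M2 n / INR n)).
  { intros e He. destruct (Hunif e He) as [N HN]. exists (max N 1). intros n Hn.
    destruct (HM n) as [HD Hmx].
    destruct (F2 n _ _ ltac:(lia) HD) as [HT [E1 E2]].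
    pose proof (HN n ltac:(lia) _ _ HT) as A. rewrite E1, E2 in A.
    pose proof (HN n ltac:(lia) _ _ HTt) as B.
    pose proof (Hmx _ _ (F1 n _ _ HTt)) as C.
    pose proof (Hmaxt _ _ HT) as D.
    apply Rabs_def2 in A. apply Rabs_def2 in B.
    split; [exact HT|]. split; [apply Rabs_def1|]; lra. }
  assert (Hi : Un_cv (fun n => M1 n / INR n) theta1 /\ Un_cv (fun n => M2 n / INR n) theta2).
  { split; intros eps He; destruct (gap h theta1 theta2 Hhc (conj HTt Hmaxt) Huniq eps He) as [d [Hd Hg]];
    destruct (Key (d/2) ltac:(lra)) as [N HN]; exists N; intros n Hn;
    destruct (HN n ltac:(lia)) as [HT [_ Hh]]; unfold R_dist, Rdist;
    destruct (Hg _ _ HT ltac:(lra)); assumption. }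
  split; [exact Hi|]. split.
  { intros eps He. destruct (Key eps He) as [N HN]. exists N. intros n Hn.
    destruct (HN n ltac:(lia)) as [_ [H _]]. exact H. }
  intros m1 m2 Hm Hc1 Hc2.
  assert (Hx : forall (m M : nat -> R) th, (forall n, (1 <= n)%nat -> 0 <= m n) ->
     Un_cv (fun n => m n / M n) 1 -> Un_cv (fun n => M n / INR n) th ->
     Un_cv (fun n => m n / INR n) th).
  { intros m M th _ H1 H2.
    pose proof (CV_mult _ _ _ _ H1 H2) as H3. rewrite Rmult_1_l in H3.
    destruct (H1 (1/2) ltac:(lra)) as [N HN].
    apply (cv_ext (fun i => m i / M i * (M i / INR i)) _ _ (max N 1)); [|exact H3].
    intros n Hn. specialize (HN n ltac:(lia)). unfold R_dist, Rdist in HN.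
    assert (HMn : M n <> 0).
    { intro Z. rewrite Z in HN. unfold Rdiv in HN. rewrite Rinv_0, Rmult_0_r in HN.
      apply Rabs_def2 in HN. lra. }
    assert (0 < INR n) by (apply lt_0_INR; lia).
    field. split; lra. }
  assert (C1 : Un_cv (fun n => m1 n / INR n) theta1).
  { apply (Hx m1 M1); [intros n _; destruct (Hm n); lra| exact Hc1 | apply Hi]. }
  assert (C2 : Un_cv (fun n => m2 n / INR n) theta2).
  { apply (Hx m2 M2); [intros n _; destruct (Hm n) as [? [? [? ?]]]; lra| exact Hc2 | apply Hi]. }
  intros eps He.
  destruct (Hhc theta1 theta2 HTt (eps/2) ltac:(lra)) as [d [Hd Hcd]].
  destruct (C1 d Hd) as [N1 HN1]. destruct (C2 d Hd) as [N2 HN2].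
  destruct (Hunif (eps/2) ltac:(lra)) as [N3 HN3].
  exists (max (max N1 N2) (max N3 1)). intros n Hn.
  destruct (F2 n _ _ ltac:(lia) (Hm n)) as [HT [E1 E2]].
  specialize (Hcd _ _ HT (HN1 n ltac:(lia)) (HN2 n ltac:(lia))).
  pose proof (HN3 n ltac:(lia) _ _ HT) as A. rewrite E1, E2 in A.
  unfold R_dist, Rdist. apply Rabs_def2 in A. apply Rabs_def2 in Hcd. apply Rabs_def1; lra.
Qed.
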